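(* Let $p$ be a prime, $t\ge1$, and let $(K_n,\alpha)$ be an edge-labeled complete graph over $\mathbb{Z}/p^t\mathbb{Z}$ whose edges carry labels $p^{i_1},\dots,p^{i_{r_n}}$ (in no particular order), with $1\le i_s<t$ for all $s$. For $1<i\le n$ let $p^{a_i}=\big[\bigcup_{k=1}^{i-1}\{(p^{(i,k)})\}\big]$. Then for each $i>1$ the vector $F^{(i)}=(f^{(i)}_{v_1},\dots,f^{(i)}_{v_n})$ defined by $f^{(i)}_v=p^{a_i}$ if $v\in V^{(i,a_i+1)}$ and $f^{(i)}_v=0$ otherwise is an $i$-th flow-up class (with $f^{(i)}_{v_i}=p^{a_i}$). Moreover, $\operatorname{rk}[\mathbb{Z}/p^t\mathbb{Z}]_{(K_n,\alpha)}=n$.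
   Context: A spline on an edge-labeled graph $(G,\alpha)$ over $\mathbb{Z}/m\mathbb{Z}$ (edges labeled by nonzero ideals) is a vector $(f_{v_1},\dots,f_{v_n})\in(\mathbb{Z}/m\mathbb{Z})^n$ with $f_{v_i}-f_{v_j}\in\alpha(v_iv_j)$ for every edge; the splines form a $\mathbb{Z}$-module $[\mathbb{Z}/m\mathbb{Z}]_{(G,\alpha)}$ whose rank $\operatorname{rk}$ is the smallest size of a generating set. An $i$-th flow-up class is a spline with $f_{v_i}\ne0$ and $f_{v_t}=0$ for $t<i$. $K_n$ is the complete graph on $v_1,\dots,v_n$, $r_n=n(n-1)/2$; an edge labeled $p^c$ means its ideal is generated by $p^c+p^t\mathbb{Z}$. A trail is a sequence of vertices and edges in which no edge is repeated; a $v_k$-trail of $v_i$ is a trail from $v_i$ to $v_k$; $(p^{(i,k)})$ is the gcd (in $\mathbb{Z}$) of the integer labels on such a trail, $\{(p^{(i,k)})\}$ the set of these over all $v_k$-trails of $v_i$, and $[\,S\,]$ the lcm of a finite set $S$. For $1\le j\le n$ and a positive integer $b$, $V^{(j,b)}$ is the vertex set of $H^{(j,b)}$, the largest connected subgraph of $K_n$ containing $v_j$, having $v_j$ as its smallest-index vertex, all of whose edges carry labels $p^{c}$ with $b\le c<t$; i.e. the connected component of $v_j$ in the graph on $\{v_j,\dots,v_n\}$ whose edges are those edges of $K_n$ among these vertices labeled $p^c$ with $c\ge b$. *)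

(* Defs.v *)
From mathcomp Require Import all_boot all_order all_algebra.
Unset Printing Implicit Defensive.
Import GRing.Theory.
Local Open Scope ring_scope.

(* Vertices v_1,...,v_n are the ordinals 0,...,n-1 of 'I_n.
   The edge-labeling of K_n is given by an exponent function
   lab : 'I_n -> 'I_n -> nat (meaningful for x != y, assumed symmetric):
   the edge v_x v_y is labeled p^(lab x y), i.e. by the ideal of
   Z/p^tZ generated by p^(lab x y) + p^t Z. *)

Definition in_ideal (m : nat) (c x : 'Z_m) : Prop := exists r : 'Z_m, x = r * c.

Definition spline (p t n : nat) (lab : 'I_n -> 'I_n -> nat)
    (f : {ffun 'I_n -> 'Z_(p ^ t)}) : Prop :=
  forall x y : 'I_n, x != y -> in_ideal (p ^ t) ((p ^ lab x y)%:R) (f x - f y).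

(* i-th flow-up class (i is a 0-based index) *)
Definition flow_up (p t n : nat) (lab : 'I_n -> 'I_n -> nat) (i : 'I_n)
    (f : {ffun 'I_n -> 'Z_(p ^ t)}) : Prop :=
  [/\ spline p t n lab f, f i != 0 & forall s : 'I_n, (s < i)%N -> f s = 0].

Definition generates (p t n : nat) (lab : 'I_n -> 'I_n -> nat) (m : nat)
    (g : 'I_m -> {ffun 'I_n -> 'Z_(p ^ t)}) : Prop :=
  (forall j, spline p t n lab (g j)) /\
  forall f, spline p t n lab f ->
    exists c : 'I_m -> int, f = \sum_(j < m) (g j) *~ (c j).

Definition spline_rank (p t n : nat) (lab : 'I_n -> 'I_n -> nat) (r : nat) : Prop :=
  (exists g : 'I_r -> {ffun 'I_n -> 'Z_(p ^ t)}, generates p t n lab r g) /\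
  (forall (m : nat) (g : 'I_m -> {ffun 'I_n -> 'Z_(p ^ t)}),
      generates p t n lab m g -> (r <= m)%N).

(* A trail starting at x is encoded by the sequence s of the subsequent
   vertices (the trail is x :: s); its edges are the consecutive pairs,
   stored as unordered pairs (min, max). *)
Definition trail_edges (n : nat) (x : 'I_n) (s : seq 'I_n) : seq (nat * nat) :=
  pairmap (fun a b : 'I_n => (minn a b, maxn a b)) x s.

Definition is_trail (n : nat) (x : 'I_n) (s : seq 'I_n) : bool :=
  path (fun a b : 'I_n => a != b) x s && uniq (trail_edges n x s).

Definition trail_gcd (p n : nat) (lab : 'I_n -> 'I_n -> nat) (x : 'I_n)
    (s : seq 'I_n) : nat :=
  foldr gcdn 0 (pairmap (fun a b : 'I_n => (p ^ lab a b)%N) x s).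

(* Since a trail uses each of the
   r_n = n(n-1)/2 edges of K_n at most once, every trail x :: s has
   size s <= r_n, so sequences of length <= r_n enumerate all trails. *)
Definition seqs_upto (n N : nat) : seq (seq 'I_n) :=
  flatten [seq [seq val tu | tu <- enum {: m.-tuple 'I_n}] | m <- iota 0 N.+1].

Definition r_ (n : nat) : nat := ((n * (n - 1)) %/ 2)%N.

(* [ \bigcup_{k<i} {(p^{(i,k)})} ] : lcm over all v_k-trails of v_i, k < i *)
Definition lcm_trails (p n : nat) (lab : 'I_n -> 'I_n -> nat) (i : 'I_n) : nat :=
  \big[lcmn/1%N]_(s <- seqs_upto n (r_ n) |
       is_trail n i s && (last i s < i)%N) trail_gcd p n lab i s.

(* V^{(j,b)}: connected component of v_j in the graph on {v_j,...,v_n}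
   whose edges are those labeled p^c with c >= b. *)
Definition Vset (n : nat) (lab : 'I_n -> 'I_n -> nat) (j : 'I_n) (b : nat)
    : {set 'I_n} :=
  [set v | connect (fun x y : 'I_n =>
             [&& (j <= x)%N, (j <= y)%N, x != y & (b <= lab x y)%N]) j v].

Definition Fvec (p t n : nat) (lab : 'I_n -> 'I_n -> nat) (i : 'I_n) (a : nat)
    : {ffun 'I_n -> 'Z_(p ^ t)} :=
  [ffun v => if v \in Vset n lab i a.+1 then (p ^ a)%:R else 0].

(* Main.v *)
Require Import Defs.
From mathcomp Require Import all_boot all_order all_algebra.
From mathcomp Require Import zify.
Import GRing.Theory.
Local Open Scope ring_scope.

Section S.
Variables (p t n : nat) (lab : 'I_n -> 'I_n -> nat).
Hypothesis pP : prime p.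
Hypothesis t1 : (1 <= t)%N.

Local Notation N := (p ^ t)%N.
Local Notation Z := 'Z_(p ^ t).
Local Notation sp := (spline p t n lab).

Lemma p_gt1 : (1 < p)%N. Proof. exact: prime_gt1. Qed.
Lemma p_gt0 : (0 < p)%N. Proof. exact: prime_gt0. Qed.
Lemma N_gt1 : (1 < N)%N.
Proof. apply: (leq_trans p_gt1); rewrite -{1}(expn1 p) leq_pexp2l ?p_gt0 //. Qed.

Lemma I0 (c : Z) : in_ideal N c 0. Proof. by exists 0; rewrite mul0r. Qed.
Lemma ID (c x y : Z) : in_ideal N c x -> in_ideal N c y -> in_ideal N c (x + y).
Proof. by case=> r -> [s ->]; exists (r + s); rewrite mulrDl. Qed.
Lemma IN (c x : Z) : in_ideal N c x -> in_ideal N c (- x).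
Proof. by case=> r ->; exists (- r); rewrite mulNr. Qed.
Lemma IB (c x y : Z) : in_ideal N c x -> in_ideal N c y -> in_ideal N c (x - y).
Proof. by move=> hx hy; apply: ID => //; apply: IN. Qed.
Lemma Idvd (d e : nat) (x : Z) : (d %| e)%N -> in_ideal N e%:R x -> in_ideal N d%:R x.
Proof.
by case/dvdnP=> k -> [r ->]; exists (r * k%:R); rewrite natrM mulrA.
Qed.
Lemma Iself (d e : nat) : (d %| e)%N -> in_ideal N (d%:R : Z) e%:R.
Proof. by case/dvdnP=> k ->; exists k%:R; rewrite natrM. Qed.

Lemma valZ (k : nat) : ((k%:R : Z) : nat) = (k %% N)%N.
Proof. exact: val_Zp_nat N_gt1 k. Qed.

Lemma KA (k a : nat) (r : Z) : (a < t)%N ->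
  (k%:R * (p ^ a)%:R : Z) = r * (p ^ a.+1)%:R -> (p %| k)%N.
Proof.
move=> at1 E.
have E2 : ((k * p ^ a)%:R : Z) = ((r : nat) * p ^ a.+1)%:R by rewrite !natrM natr_Zp.
have := congr1 (fun z : Z => (z : nat)) E2; rewrite /= !valZ => /eqP.
have dv : (p ^ a.+1 %| N)%N by rewrite dvdn_exp2l.
move/eqP=> E3.
have : (k * p ^ a == (r : nat) * p ^ a.+1 %[mod p ^ a.+1])%N.
  by apply/eqP; rewrite -(modn_dvdm _ dv) E3 (modn_dvdm _ dv).
rewrite modnMl => h; have : (p ^ a.+1 %| k * p ^ a)%N by exact h.
rewrite expnS dvdn_pmul2r //; last by rewrite expn_gt0 p_gt0.
Qed.

Lemma pa_neq0 (a : nat) : (a < t)%N -> ((p ^ a)%:R : Z) != 0.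
Proof.
move=> at1; apply/eqP => E.
have := @KA 1 a 0 at1; rewrite mul1r mul0r E => /(_ erefl).
by rewrite dvdn1 => /eqP h; move: p_gt1; rewrite h.
Qed.

Lemma Ip_tm1 (x : Z) : x *+ p = 0 -> in_ideal N (p ^ t.-1)%:R x.
Proof.
move=> E.
have E2 : (((x : nat) * p)%:R : Z) = 0 by rewrite natrM natr_Zp mulr_natr.
have := congr1 (fun z : Z => (z : nat)) E2; rewrite /= valZ => /eqP; rewrite -/(dvdn _ _).
rewrite -{1}(prednK t1) expnSr dvdn_pmul2r ?p_gt0 // => h.
exists ((x : nat) %/ p ^ t.-1)%:R; rewrite -natrM divnK //.
by rewrite natr_Zp.
Qed.


Hypothesis labS : forall x y, lab x y = lab y x.
Hypothesis labB : forall x y : 'I_n, x != y -> (1 <= lab x y < t)%N.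

Lemma mem_edges (s : seq 'I_n) (y : 'I_n) (e : nat * nat) :
  e \in trail_edges n y s -> (e.1 \in map val (y :: s)) && (e.2 \in map val (y :: s)).
Proof.
elim: s y => [|z s IH] y //=.
rewrite inE => /orP [/eqP -> /= | /IH].
  case: (leqP y z) => h; by rewrite !inE !eqxx ?orbT.
rewrite /= !inE => /andP [h1 h2]; by rewrite h1 h2 !orbT.
Qed.

Lemma uniq_edges (s : seq 'I_n) (x : 'I_n) : uniq (x :: s) -> uniq (trail_edges n x s).
Proof.
elim: s x => [|y s IH] x //= /andP [hx hu].
rewrite IH // andbT; apply/negP => /mem_edges /andP [h1 h2].
have hxm : (x : nat) \notin map val (y :: s) by rewrite mem_map //; exact: val_inj.
case: (leqP x y) => h.
  by move: h1; rewrite /= (minn_idPl h) (negPf hxm).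
by move: h2; rewrite /= (maxn_idPl (ltnW h)) (negPf hxm).
Qed.

Lemma path_ideal (h : {ffun 'I_n -> Z}) (d : nat) s x : sp h ->
  (d %| trail_gcd p n lab x s)%N -> path (fun a b : 'I_n => a != b) x s ->
  in_ideal N d%:R (h x - h (last x s)).
Proof.
move=> hs; elim: s x => [|y s IH] x /=.
  by rewrite subrr => _ _; apply: I0.
rewrite /trail_gcd /= dvdn_gcd => /andP [d1 d2] /andP [xy pth].
have -> : h x - h (last y s) = (h x - h y) + (h y - h (last y s)) by rewrite addrA subrK.
apply: ID; last by apply: IH.
by apply: (Idvd _ _ _ d1); apply: hs.
Qed.

Lemma gcd_div (d : nat) s x :
  path (fun a b : 'I_n => (d %| p ^ lab a b)%N) x s -> (d %| trail_gcd p n lab x s)%N.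
Proof.
elim: s x => [|y s IH] x /=; first by rewrite /trail_gcd /= dvdn0.
by case/andP=> h1 h2; rewrite /trail_gcd /= dvdn_gcd h1; apply: IH.
Qed.

Section L.
Variables (T : eqType) (P : pred T) (F : T -> nat).
Lemma lcm_dvd (l : seq T) m : (forall x, x \in l -> P x -> (F x %| m)%N) ->
  (\big[lcmn/1%N]_(x <- l | P x) F x %| m)%N.
Proof.
elim: l => [|y l IH] h; first by rewrite big_nil dvd1n.
have h' : forall x, x \in l -> P x -> (F x %| m)%N.
  by move=> x xl Px; apply: h => //; rewrite inE xl orbT.
rewrite big_cons; case: ifP => Py; last exact: IH.
by rewrite dvdn_lcm h ?mem_head //= IH.
Qed.
Lemma lcm_sup (l : seq T) x : x \in l -> P x -> (F x %| \big[lcmn/1%N]_(x <- l | P x) F x)%N.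
Proof.
elim: l => [|y l IH] //; rewrite inE big_cons => /orP [/eqP -> | xl] Px.
  by rewrite Px dvdn_lcml.
case: ifP => _; last by apply: IH.
by apply: dvdn_trans (IH xl Px) _; apply: dvdn_lcmr.
Qed.
Lemma lcm_att (l : seq T) : (forall x, x \in l -> P x -> exists e, F x = (p ^ e)%N) ->
  \big[lcmn/1%N]_(x <- l | P x) F x = 1%N \/
  exists x, [/\ x \in l, P x & F x = \big[lcmn/1%N]_(x <- l | P x) F x].
Proof.
elim: l => [|y l IH] h; first by left; rewrite big_nil.
have h' : forall x, x \in l -> P x -> exists e, F x = (p ^ e)%N.
  by move=> x xl; apply: h; rewrite inE xl orbT.
rewrite big_cons; case: ifP => Py; last first.
  case: (IH h') => [->|[x [xl Px Ex]]]; [by left | right; exists x; split => //].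
  by rewrite inE xl orbT.
have [e1 E1] := h y (mem_head _ _) Py.
case: (IH h') => [->|[x [xl Px Ex]]].
  by right; exists y; rewrite lcmn1 mem_head.
right; have [e2 E2] := h' x xl Px.
case: (leqP e1 e2) => le.
  exists x; split => //; first by rewrite inE xl orbT.
  by rewrite -Ex; apply/esym/lcmn_idPr; rewrite E1 E2 dvdn_exp2l.
exists y; split => //; first by rewrite mem_head.
by apply/esym/lcmn_idPl; rewrite -Ex E1 E2 dvdn_exp2l // ltnW.
Qed.
End L.

Lemma path_snd (T : Type) (e : rel T) (Q : pred T) x s :
  (forall a b, e a b -> Q b) -> path e x s -> all Q s.
Proof.
move=> h; elim: s x => [|y s IH] x //= /andP [h1 h2].
by rewrite (h _ _ h1) (IH _ h2).
Qed.

Lemma seqs_mem (s : seq 'I_n) M : (size s <= M)%N -> s \in seqs_upto n M.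
Proof.
move=> h; apply/flattenP; exists [seq val tu | tu <- enum {: (size s).-tuple 'I_n}].
  by apply/mapP; exists (size s) => //; rewrite mem_iota ltnS h.
by apply/mapP; exists (in_tuple s) => //; rewrite mem_enum.
Qed.

Definition A (i : 'I_n) := logn p (lcm_trails p n lab i).

Lemma trail_dvd (i : 'I_n) s : is_trail n i s -> (last i s < i)%N ->
  (trail_gcd p n lab i s %| p ^ t.-1)%N.
Proof.
case: s => [|y s] /=; first by rewrite ltnn.
rewrite /is_trail /= => /andP [/andP [iy _] _] _.
rewrite /trail_gcd /=; apply: dvdn_trans (dvdn_gcdl _ _) _.
rewrite dvdn_exp2l //; have := labB _ _ iy; lia.
Qed.

Lemma A_spec (i : 'I_n) : lcm_trails p n lab i = (p ^ A i)%N /\ (A i < t)%N.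
Proof.
have : (lcm_trails p n lab i %| p ^ t.-1)%N.
  by apply: lcm_dvd => s _ /andP [h1 h2]; exact: trail_dvd.
case/(dvdn_pfactor _ _ pP) => a ale E.
rewrite /A E pfactorK //; split => //; lia.
Qed.

Lemma TL (i : 'I_n) (h : {ffun 'I_n -> Z}) : sp h ->
  (forall k : 'I_n, (k < i)%N -> in_ideal N (p ^ t.-1)%:R (h k)) ->
  in_ideal N (p ^ A i)%:R (h i).
Proof.
move=> hs hk; rewrite -(A_spec i).1 /lcm_trails.
case: (@lcm_att _ (fun s => is_trail n i s && (last i s < i)%N) (trail_gcd p n lab i)
         (seqs_upto n (r_ n))).
- move=> s _ /andP [h1 h2].
  by case/(dvdn_pfactor _ _ pP): (trail_dvd _ _ h1 h2) => e _ ->; exists e.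
- by move=> ->; exists (h i); rewrite mulr1.
case=> s [_ /andP [tr lt] <-].
have hh := path_ideal _ _ _ _ hs (dvdnn _) (proj1 (andP tr)).
have hl := hk _ lt.
have -> : h i = (h i - h (last i s)) + h (last i s) by rewrite subrK.
apply: ID => //; apply: (Idvd _ _ _ _ hl); exact: trail_dvd.
Qed.

Lemma Vge (i : 'I_n) b v : v \in Vset n lab i b -> (i <= v)%N.
Proof.
rewrite inE => c.
have cl : closed (fun x y : 'I_n => [&& (i <= x)%N, (i <= y)%N, x != y & (b <= lab x y)%N])
              [pred v : 'I_n | (i <= v)%N].
  by move=> x y /and4P [hx hy _ _]; rewrite !inE hx hy.
by have := closed_connect cl c; rewrite !inE leqnn => <-.
Qed.

Lemma Vi (i : 'I_n) b : i \in Vset n lab i b.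
Proof. by rewrite inE connect0. Qed.

Lemma KL (i x y : 'I_n) : x \in Vset n lab i (A i).+1 -> y \notin Vset n lab i (A i).+1 -> x != y ->
  (lab x y <= A i)%N.
Proof.
set a := A i; move=> xV yV xy; rewrite leqNgt; apply/negP => la.
have ix := Vge _ _ _ xV.
case: (leqP i y) => iy.
  move/negP: yV; apply; move: xV; rewrite !inE => c.
  by apply: connect_trans c (connect1 _); rewrite ix iy xy la.
move: xV ix xy la; rewrite inE => /connectP [q pq ->].
case/shortenP: pq => q' pq' uq' _ ix xy la.
set s := rcons q' y.
set e := (fun u v : 'I_n => [&& (i <= u)%N, (i <= v)%N, u != v & ((A i).+1 <= lab u v)%N]).
have allq : all (fun v : 'I_n => (i <= v)%N) q'.
  by apply: (path_snd _ e _ _ _ _ pq') => u v /and4P [] _ ->.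
have yni : y \notin i :: q'.
  rewrite inE negb_or; apply/andP; split.
    by apply/eqP => E; move: iy; rewrite E ltnn.
  apply/negP => yq; move/allP: allq => /(_ _ yq); by rewrite leqNgt iy.
have us : uniq (i :: s) by rewrite /s -rcons_cons rcons_uniq yni uq'.
have pth : path (fun a b : 'I_n => a != b) i s.
  rewrite /s rcons_path xy andbT; apply: sub_path pq' => u v /and4P [].
  by [].
have tr : is_trail n i s by rewrite /is_trail pth uniq_edges.
have ls : last i s = y by rewrite last_rcons.
have sz : (size s <= r_ n)%N.
  have := uniq_leq_size us (fun v _ => mem_enum _ v); rewrite size_enum_ord /= => h.
  have n2 : (2 <= n)%N by have := ltn_ord i; lia.
  rewrite /r_ leq_divRL //; nia.
have mem := seqs_mem _ _ sz.
have dv : (p ^ (A i).+1 %| trail_gcd p n lab i s)%N.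
  apply: gcd_div; rewrite /s rcons_path dvdn_exp2l // andbT.
  by apply: sub_path pq' => u v /and4P [_ _ _ h]; rewrite dvdn_exp2l.
have := lcm_sup _ (fun s => is_trail n i s && (last i s < i)%N) (trail_gcd p n lab i) _ _ mem.
rewrite tr ls iy => /(_ erefl) h2.
have := dvdn_trans dv h2.
by rewrite -/(lcm_trails p n lab i) (A_spec i).1 dvdn_Pexp2l ?p_gt1 // ltnn.
Qed.


Lemma sp0 : sp 0.
Proof. by move=> x y _; rewrite !ffunE subrr; apply: I0. Qed.
Lemma spD f g : sp f -> sp g -> sp (f + g).
Proof.
move=> hf hg x y xy; rewrite !ffunE.
have -> : f x + g x - (f y + g y) = (f x - f y) + (g x - g y) by rewrite opprD addrACA.
by apply: ID; [apply: hf | apply: hg].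
Qed.
Lemma spN f : sp f -> sp (- f).
Proof. by move=> hf x y xy; rewrite !ffunE -opprD; apply: IN; apply: hf. Qed.
Lemma spB f g : sp f -> sp g -> sp (f - g).
Proof. by move=> hf hg; apply: spD => //; apply: spN. Qed.
Lemma spMn f k : sp f -> sp (f *+ k).
Proof. by move=> hf; elim: k => [|k IH]; [rewrite mulr0n; apply: sp0 | rewrite mulrS; apply: spD]. Qed.
Lemma spSum (I : Type) (r : seq I) (P : pred I) F : (forall i, sp (F i)) -> sp (\sum_(i <- r | P i) F i).
Proof. by move=> h; apply: big_ind => //; [apply: sp0 | apply: spD]. Qed.

Lemma FU (i : 'I_n) : [/\ sp (Fvec p t n lab i (A i)), Fvec p t n lab i (A i) i = (p ^ A i)%:R
  & forall s : 'I_n, (s < i)%N -> Fvec p t n lab i (A i) s = 0].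
Proof.
split.
- move=> x y xy; rewrite !ffunE; case: ifP => hx; case: ifP => hy.
  + by rewrite subrr; apply: I0.
  + rewrite subr0; apply: Iself; rewrite dvdn_exp2l //; apply: KL => //; by rewrite hy.
  + rewrite sub0r; apply: IN; apply: Iself; rewrite labS dvdn_exp2l //.
    by apply: KL => //; [rewrite hx | rewrite eq_sym].
  + by rewrite subrr; apply: I0.
- by rewrite ffunE Vi.
- move=> s si; rewrite ffunE; case: ifP => // /Vge; by rewrite leqNgt si.
Qed.

Definition G (i : 'I_n) := Fvec p t n lab i (A i).

Lemma gen_step m : forall k, (k + m)%N = n -> forall f, sp f ->
  (forall s : 'I_n, (s < k)%N -> f s = 0) -> exists c : 'I_n -> int, f = \sum_(j < n) G j *~ c j.
Proof.
elim: m => [|m IH] k km f hf hk.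
  exists (fun=> 0); rewrite big1 => [|j _]; last by rewrite mulr0z.
  apply/ffunP => v; rewrite ffunE hk //; rewrite addn0 in km; by rewrite km.
have kn : (k < n)%N by lia.
set ko := Ordinal kn.
have [FUs FUi FUb] := FU ko.
have : in_ideal N (p ^ A ko)%:R (f ko).
  by apply: TL => // s sk; rewrite hk //; exact: I0.
case=> r fr.
set f' := f - G ko *+ (r : nat).
have hf' : sp f' by apply: spB => //; apply: spMn.
have [c' Ec'] : exists c : 'I_n -> int, f' = \sum_(j < n) G j *~ c j.
  apply: (IH k.+1) => //; first lia.
  move=> s; rewrite ltnS leq_eqVlt => /orP [/eqP sk | sk]; rewrite /f' !ffunE ffunMnE.
    have -> : s = ko by apply: val_inj.
by rewrite /G FUi fr -[_ *+ (r : nat)]mulr_natr natr_Zp mulrC subrr.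
  by rewrite hk // /G FUb // mul0rn subrr.
exists (fun j => c' j + (if j == ko then (r : nat)%:Z else 0)).
rewrite (eq_bigr (fun j => G j *~ c' j + G j *~ (if j == ko then (r:nat)%:Z else 0))); last first.
  by move=> j _; rewrite mulrzDr.
rewrite big_split /= -Ec' (bigD1 ko) //= eqxx big1 ?addr0; last first.
  by move=> j /negPf ->; rewrite mulr0z.
by rewrite [G ko *~ _](_ : _ = G ko *+ (r : nat)) // /f' subrK.
Qed.

Lemma zmodN (x : {ffun 'I_n -> Z}) (z : int) : x *~ z = x *+ absz (z %% N)%Z.
Proof.
have N0 : (N%:Z != 0) by rewrite eqz_nat -lt0n ltnW // N_gt1.
rewrite {1}(divz_eq z N) mulrzDr mulrzA.
have -> : x *~ (z %/ N)%Z *~ N%:Z = 0.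
  rewrite [_ *~ N%:Z](_ : _ = (x *~ (z %/ N)%Z) *+ N) //; apply/ffunP => v; rewrite ffunMnE ffunE -mulr_natr.
  by rewrite pchar_Zp ?mulr0 // N_gt1.
rewrite add0r; have := modz_ge0 z N0; case: (z %% N)%Z => // k _.
Qed.

Lemma fin (u v a : nat) (r : Z) : (u < p)%N -> (v < p)%N -> (a < t)%N ->
  ((p ^ a)%:R *+ u - (p ^ a)%:R *+ v : Z) = r * (p ^ a.+1)%:R -> u = v.
Proof.
move=> up vp at1.
wlog le : u v r up vp / (v <= u)%N.
  move=> W; case: (leqP v u) => h; first by apply: W.
  move=> E; apply/esym; apply: (W v u (- r)) => //; first exact: ltnW.
  by rewrite mulNr -E opprB.
move=> E.
have E2 : ((u - v)%:R * (p ^ a)%:R : Z) = r * (p ^ a.+1)%:R by rewrite mulr_natl mulrnBr.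
have := KA _ _ _ at1 E2.
case: (posnP (u - v)) => [h0|hpos] H; first lia.
have := dvdn_leq hpos H; lia.
Qed.

Lemma lower m (g : 'I_m -> {ffun 'I_n -> Z}) : generates p t n lab m g -> (n <= m)%N.
Proof.
case=> gs gen.
have gen' : forall f, sp f -> exists c : {ffun 'I_m -> nat}, f == \sum_(j < m) g j *+ c j.
  move=> f /gen [c ->]; exists [ffun j => absz (c j %% N)%Z]; apply/eqP.
  by apply: eq_bigr => j _; rewrite ffunE zmodN.
pose S := fun e : {ffun 'I_n -> 'Z_p} => \sum_(i < n) G i *+ (e i : nat).
have Ssp : forall e, sp (S e).
  by move=> e; apply: spSum => i; apply: spMn; have [] := FU i.
pose U e := xchoose (gen' _ (Ssp e)).
have UP e : S e = \sum_(j < m) g j *+ U e j := eqP (xchooseP (gen' _ (Ssp e))).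
pose phi e := [ffun j => ((U e j)%:R : 'Z_p)].
have inj : injective phi.
  move=> e1 e2 E.
  have Um : forall j, (U e1 j %% p = U e2 j %% p)%N.
    move=> j; have := congr1 (fun f : {ffun 'I_m -> 'Z_p} => (f j : nat)) E; rewrite /phi /= !ffunE.
    by rewrite !val_Zp_nat ?p_gt1.
  set h := \sum_(j < m) (g j *+ (U e1 j %/ p) - g j *+ (U e2 j %/ p)).
  have hs : sp h by apply: spSum => j; apply: spB; apply: spMn.
  have Sdiff : S e1 - S e2 = h *+ p.
    have dec : forall u : {ffun 'I_m -> nat}, \sum_(j < m) g j *+ u j =
        (\sum_(j < m) g j *+ (u j %/ p)) *+ p + \sum_(j < m) g j *+ (u j %% p).
      move=> u; rewrite -sumrMnl -big_split; apply: eq_bigr => j _.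
      by rewrite /= -mulrnA -mulrnDr -divn_eq.
    rewrite !UP !dec.
    have -> : \sum_(j < m) g j *+ (U e1 j %% p) = \sum_(j < m) g j *+ (U e2 j %% p).
      by apply: eq_bigr => j _; rewrite Um.
    by rewrite /h sumrB mulrnBl opprD addrACA subrr addr0.
  have ev : forall v : 'I_n, (S e1 - S e2) v = \sum_(i' < n) (G i' v *+ e1 i' - G i' v *+ e2 i').
    move=> v; rewrite !ffunE !sum_ffunE -sumrB; apply: eq_bigr => j _; by rewrite !ffunMnE.
  suff H : forall k (i : 'I_n), (i < k)%N -> e1 i = e2 i.
    by apply/ffunP => i; apply: (H i.+1).
  elim=> [//|k IH] i; rewrite ltnS leq_eqVlt => /orP [/eqP ik | ]; last exact: IH.
  have T : forall (v i' : 'I_n), (v <= k)%N -> ((v < i')%N || (i' < k)%N) ->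
      G i' v *+ e1 i' - G i' v *+ e2 i' = 0.
    move=> v i' vk /orP [vi | ik'].
      by have [_ _ ->] := FU i'; rewrite // !mul0rn subrr.
    by rewrite IH // subrr.
  have hv : forall v : 'I_n, (v < i)%N -> h v *+ p = 0.
    move=> v vi; rewrite -ffunMnE -Sdiff ev big1 // => i' _; apply: T; first lia.
    by case: (ltnP v i') => //=; lia.
  have hi : h i *+ p = (p ^ A i)%:R *+ e1 i - (p ^ A i)%:R *+ e2 i.
    rewrite -ffunMnE -Sdiff ev (bigD1 i) //= big1 ?addr0; first by have [_ -> _] := FU i.
    move=> i' ne; apply: T; first lia.
    have ne' : (i' : nat) != k by rewrite -ik.
    case: (ltnP i' k) => h1; rewrite ?orbT // orbF ik ltn_neqAle eq_sym ne' h1 //.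
  have [r hr] : in_ideal N (p ^ A i)%:R (h i).
    by apply: TL => // k' k'i; apply: Ip_tm1; apply: hv.
  have [_ at1] := A_spec i.
  apply: ord_inj; apply: (fin _ _ _ r _ _ at1).
  - by case: (e1 i) => x hx /=; rewrite Zp_cast ?p_gt1 in hx.
  - by case: (e2 i) => x hx /=; rewrite Zp_cast ?p_gt1 in hx.
  by rewrite -hi hr -mulrnAr expnSr natrM mulr_natr.
have := leq_card _ inj; rewrite !card_ffun !card_ord Zp_cast ?p_gt1 //.
by rewrite leq_exp2l ?p_gt1.
Qed.

Lemma main_sec : (forall i : 'I_n, (0 < i)%N -> exists a, (p ^ a)%N = lcm_trails p n lab i /\
    flow_up p t n lab i (Fvec p t n lab i a) /\ Fvec p t n lab i a i = (p ^ a)%:R) /\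
  spline_rank p t n lab n.
Proof.
split.
  move=> i _; exists (A i); have [E at1] := A_spec i; have [s1 s2 s3] := FU i.
  split; first by rewrite E.
  split => //; split => //; rewrite s2; exact: pa_neq0.
split.
  exists G; split; first by move=> j; have [] := FU j.
  by move=> f hf; apply: (gen_step n 0).
by move=> m g; exact: lower.
Qed.

End S.

Theorem mainTheorem9 (p t n : nat) (lab : 'I_n -> 'I_n -> nat) :
  prime p -> (1 <= t)%N ->
  (forall x y : 'I_n, lab x y = lab y x) ->
  (forall x y : 'I_n, x != y -> (1 <= lab x y < t)%N) ->
  (forall i : 'I_n, (0 < i)%N ->
     exists a : nat,
       (p ^ a)%N = lcm_trails p n lab i /\
       flow_up p t n lab i (Fvec p t n lab i a) /\
       Fvec p t n lab i a i = (p ^ a)%:R) /\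
  spline_rank p t n lab n.
Proof.
move=> pP t1 labS labB; exact: main_sec.
Qed.
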